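(* For every integral domain $D$ and semistar operation $\star$ on $D$, $$\widetilde{\star}\text{-}\dim_v(D)=\sup\{\dim_v(D_P)\mid P\in\operatorname{QSpec}^{\widetilde{\star}}(D)\}.$$
   Context: $D$ is an integral domain with quotient field $K$; $f(D)$ denotes the nonzero finitely generated fractional ideals, $\overline{\mathcal F}(D)$ the nonzero $D$-submodules of $K$. A semistar operation $\star$ on $D$ is a map $\overline{\mathcal F}(D)\to\overline{\mathcal F}(D)$ with $(xE)^\star=xE^\star$ ($0\neq x\in K$), $E\subseteq F\Rightarrow E^\star\subseteq F^\star$, $E\subseteq E^\star=(E^\star)^\star$. $E^{\star_f}:=\bigcup\{F^\star:F\in f(D),F\subseteq E\}$. A nonzero ideal $I$ is a quasi-$\star$-ideal if $I^\star\cap D=I$; quasi-$\star$-primes/quasi-$\star$-maximal ideals are the prime ones / maximal proper ones; sets $\operatorname{QSpec}^\star(D)$, $\operatorname{QMax}^\star(D)$. $E^{\widetilde\star}:=\bigcap\{ED_M:M\in\operatorname{QMax}^{\star_f}(D)\}$ ($=K$ if empty). A valuation overring $V$ of $D$ is a $\star$-valuation overring if $F^\star\subseteq FV$ for all $F\in f(D)$. $\star$-$\dim_v(D):=\sup\{\dim V: V\text{ a }\star\text{-valuation overring of }D\}$, and $\dim_v(R)$ is the classical valuative dimension (supremum of dimensions of valuation overrings of $R$). *)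

(* Defs.v *)
(* An integral domain D is represented as a subring of its
   quotient field K (every domain embeds into its fraction field).
   Subsets of K are predicates K -> Prop. *)
From HB Require Import structures.
From mathcomp Require Import all_boot all_order all_algebra.
Set Implicit Arguments. Unset Strict Implicit. Unset Printing Implicit Defensive.
Import GRing.Theory.
Local Open Scope ring_scope.

Section Defs.
Variable K : fieldType.
Local Notation set := (K -> Prop).

Definition subset (A B : set) : Prop := forall x, A x -> B x.
Definition seteq (A B : set) : Prop := forall x, A x <-> B x.

Definition subring (R : set) : Prop :=
  R 0 /\ R 1 /\ (forall x y, R x -> R y -> R (x - y)) /\
  (forall x y, R x -> R y -> R (x * y)).

Definition domain_with_qf (D : set) : Prop :=
  subring D /\ forall x : K, exists a b, D a /\ D b /\ b != 0 /\ x = a / b.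

Definition submodule (R E : set) : Prop :=
  E 0 /\ (forall x y, E x -> E y -> E (x + y)) /\
  (forall r x, R r -> E x -> E (r * x)).

Definition nonzero (E : set) : Prop := exists x, E x /\ x != 0.

Definition Fbar (D E : set) : Prop := submodule D E /\ nonzero E.

Fixpoint span (D : set) (s : seq K) (x : K) : Prop :=
  match s with
  | [::] => x = 0
  | a :: s' => exists d y, D d /\ span D s' y /\ x = d * a + y
  end.

Definition fgfrac (D E : set) : Prop :=
  (exists s : seq K, seteq E (span D s)) /\ nonzero E.

Definition scale (x : K) (E : set) : set := fun y => exists e, E e /\ y = x * e.

Definition semistar (D : set) (star : set -> set) : Prop :=
  (forall E, Fbar D E -> Fbar D (star E)) /\
  (forall x E, x != 0 -> Fbar D E -> seteq (star (scale x E)) (scale x (star E))) /\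
  (forall E F, Fbar D E -> Fbar D F -> subset E F -> subset (star E) (star F)) /\
  (forall E, Fbar D E -> subset E (star E)) /\
  (forall E, Fbar D E -> seteq (star (star E)) (star E)).

Definition star_f (D : set) (star : set -> set) : set -> set :=
  fun E x => exists F, fgfrac D F /\ subset F E /\ star F x.

Inductive fsum (P : set) : set :=
  | fsum0 : fsum P 0
  | fsumS a x : P a -> fsum P x -> fsum P (a + x).

Definition prodm (E F : set) : set :=
  fsum (fun y => exists e f, E e /\ F f /\ y = e * f).

Definition ideal (D I : set) : Prop := subset I D /\ submodule D I /\ nonzero I.

Definition quasi_ideal (D : set) (star : set -> set) (I : set) : Prop :=
  ideal D I /\ seteq (fun x => star I x /\ D x) I.

Definition prime_in (R I : set) : Prop :=
  ~ I 1 /\ forall a b, R a -> R b -> I (a * b) -> I a \/ I b.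

Definition QSpec (D : set) (star : set -> set) (P : set) : Prop :=
  quasi_ideal D star P /\ prime_in D P.

Definition QMax (D : set) (star : set -> set) (M : set) : Prop :=
  quasi_ideal D star M /\ ~ M 1 /\
  forall J, quasi_ideal D star J -> ~ J 1 -> subset M J -> subset J M.

Definition localize (D P : set) : set :=
  fun x => exists a s, D a /\ D s /\ ~ P s /\ x = a / s.

Definition stilde (D : set) (star : set -> set) : set -> set :=
  fun E x => forall M, QMax D (star_f D star) M -> prodm E (localize D M) x.

Definition valuation_overring (R V : set) : Prop :=
  subring V /\ subset R V /\ forall x : K, x != 0 -> V x \/ V x^-1.

Definition star_val_overring (D : set) (star : set -> set) (V : set) : Prop :=
  valuation_overring D V /\ forall F, fgfrac D F -> subset (star F) (prodm F V).

Definition prime_ideal (V I : set) : Prop :=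
  subset I V /\ submodule V I /\ prime_in V I.

(* Extended naturals are represented by their "at least n" predicates:
   a value e : nat -> Prop with e n <-> (value >= n). *)

Definition krull_dim (V : set) : nat -> Prop :=
  fun n => exists p : nat -> set,
    (forall i, (i <= n)%N -> prime_ideal V (p i)) /\
    (forall i, (i < n)%N -> subset (p i) (p i.+1) /\ ~ subset (p i.+1) (p i)).

(* supremum (with sup of the empty family = 0) *)
Definition esup (I : Type) (P : I -> Prop) (G : I -> nat -> Prop) : nat -> Prop :=
  fun n => n = 0%N \/ exists i, P i /\ G i n.

Definition valdim (R : set) : nat -> Prop :=
  esup (valuation_overring R) krull_dim.

Definition star_dimv (D : set) (star : set -> set) : nat -> Prop :=
  esup (star_val_overring D star) krull_dim.

End Defs.

(* Main.v *)
Require Import Defs.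
From HB Require Import structures.
From mathcomp Require Import all_boot all_order all_algebra.
From Stdlib Require Import Classical ClassicalEpsilon FunctionalExtensionality PropExtensionality.
Set Implicit Arguments. Unset Strict Implicit. Unset Printing Implicit Defensive.

Section ZornS.
Variable U : Type.
Local Notation set := (U -> Prop).
Definition incl (A B : set) := forall x, A x -> B x.
Definition zchainP (C : set -> Prop) := forall A B, C A -> C B -> incl A B \/ incl B A.
Definition zbigU (C : set -> Prop) : set := fun x => exists A, C A /\ A x.

Lemma incl_eq (A B : set) : incl A B -> incl B A -> A = B.
Proof.
move=> h1 h2; apply: functional_extensionality => x.
apply: propositional_extensionality; split; [exact: h1|exact: h2].
Qed.

Inductive tower (g : set -> set) (a0 : set) : set -> Prop :=
| tw0 : tower g a0 a0
| twS A : tower g a0 A -> tower g a0 (g A)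
| twU (C : set -> Prop) : (forall A, C A -> tower g a0 A) -> zchainP C ->
    (exists A, C A) -> tower g a0 (zbigU C).

Section Tower.
Variables (g : set -> set) (a0 : set).
Hypothesis gext : forall A, tower g a0 A -> incl A (g A).

Lemma a0_le A : tower g a0 A -> incl a0 A.
Proof.
elim=> [|B tB IH|C hT IH chC [A0 CA]]; first by [].
- by move=> x hx; apply: (gext tB); apply: IH.
- by move=> x hx; exists A0; split => //; apply: (IH _ CA).
Qed.

Definition extreme (c : set) := forall a, tower g a0 a -> incl a c -> ~ incl c a -> incl (g a) c.

Lemma L1 c : tower g a0 c -> extreme c -> forall a, tower g a0 a -> incl a c \/ incl (g c) a.
Proof.
move=> tc ec a; elim=> [|A tA IH|C hT IH chC neC].
- by left; apply: a0_le.
- case: IH => [hAc|hg].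
  + case: (classic (incl c A)) => hcA.
    * by right; rewrite (incl_eq hAc hcA).
    * by left; apply: ec.
  + by right => x hx; apply: (gext tA); apply: hg.
- case: (classic (exists A, C A /\ incl (g c) A)) => [[A [CA h]]|hn].
  + by right => x /h hx; exists A.
  + left => x [A [CA hx]]; case: (IH A CA) => [h|h]; first exact: h.
    by exfalso; apply: hn; exists A.
Qed.

Lemma L2 c0 : tower g a0 c0 -> extreme c0.
Proof.
elim=> [|c tc IHc|C hT IH chC neC].
- by move=> a ta h1 h2; exfalso; apply: h2; apply: a0_le.
- move=> a ta h1 h2; case: (L1 tc IHc ta) => [hac|hg]; last by exfalso; apply: h2.
  case: (classic (incl c a)) => hca.
  + by rewrite (incl_eq hac hca).
  + by move=> x hx; apply: (gext tc); apply: (IHc a ta hac hca).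
- move=> a ta h1 h2.
  case: (classic (exists m, C m /\ ~ incl (g m) a)) => [[m [Cm ngm]]|hn].
  + case: (L1 (hT m Cm) (IH m Cm) ta) => [ham|hg]; last by exfalso; apply: ngm.
    case: (classic (incl m a)) => hma.
    * have eam := incl_eq ham hma; subst a.
      have [x [[m' [Cm' hm'x]] nmx]] : exists x, zbigU C x /\ ~ m x.
      { apply: NNPP => hne; apply: h2 => x hx; apply: NNPP => nx; apply: hne; by exists x. }
      case: (L1 (hT m Cm) (IH m Cm) (hT m' Cm')) => [hm'm|hgm].
      - by exfalso; apply: nmx; apply: hm'm.
      - by move=> y /hgm hy; exists m'.
    * by move=> x /(IH m Cm a ta ham hma) hx; exists m.
  + exfalso; apply: h2 => x [m [Cm hx]]; apply: NNPP => nx; apply: hn; exists m; split => //.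
    by move=> hg; apply: nx; apply: hg; apply: (gext (hT m Cm)).
Qed.

Lemma tower_chain : zchainP (tower g a0).
Proof.
move=> a c ta tc; case: (L1 tc (L2 tc) ta) => [h|h]; first by left.
by right => x hx; apply: h; apply: (gext tc).
Qed.
End Tower.

Variable Fam : set -> Prop.
Hypothesis Hch : forall C, (forall A, C A -> Fam A) -> zchainP C -> (exists A, C A) -> Fam (zbigU C).

Lemma zorn0 : (exists A, Fam A) -> exists M, Fam M /\ forall J, Fam J -> incl M J -> incl J M.
Proof.
move=> [a0 Fa0]; apply: NNPP => Hno.
have step : forall A, exists B, Fam A -> Fam B /\ incl A B /\ ~ incl B A.
{ move=> A; case: (classic (Fam A)) => FA; last by exists A.
  apply: NNPP => nb; apply: Hno; exists A; split => // J FJ AJ.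
  apply: NNPP => nJA; apply: nb; exists J => _; by []. }
pose g A := proj1_sig (constructive_indefinite_description _ (step A)).
have gP A : Fam A -> Fam (g A) /\ incl A (g A) /\ ~ incl (g A) A :=
  proj2_sig (constructive_indefinite_description _ (step A)).
have tF : forall A, tower g a0 A -> Fam A.
{ move=> A; elim=> [//|A1 _ IH|C _ IH chC neC]; first by case: (gP A1 IH).
  exact: Hch. }
have gext : forall A, tower g a0 A -> incl A (g A) by move=> A /tF /gP [_ []].
have tU : tower g a0 (zbigU (tower g a0)).
{ apply: twU => //; [exact: tower_chain| by exists a0; constructor]. }
have [_ [_ ng]] := gP _ (tF _ tU); apply: ng => x hx; exists (g (zbigU (tower g a0))).
by split => //; apply: twS.
Qed.
End ZornS.

Require Import Defs.
Import GRing.Theory.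
Local Open Scope ring_scope.

Section Basic.
Variable K : fieldType.
Implicit Types (A B E F : K -> Prop).

Lemma seteqE A B : seteq A B -> A = B.
Proof. move=> h; apply: incl_eq => x; by case: (h x). Qed.

Section SR.
Variable R : K -> Prop.
Hypothesis HR : subring R.
Lemma sr0 : R 0. Proof. by case: HR. Qed.
Lemma sr1 : R 1. Proof. by case: HR => _ []. Qed.
Lemma srB x y : R x -> R y -> R (x - y). Proof. by case: HR => _ [_ []] h _; apply: h. Qed.
Lemma srM x y : R x -> R y -> R (x * y). Proof. by case: HR => _ [_ []] _ h; apply: h. Qed.
Lemma srN x : R x -> R (- x). Proof. by move=> h; rewrite -sub0r; apply: srB => //; apply: sr0. Qed.
Lemma srD x y : R x -> R y -> R (x + y).
Proof. by move=> hx hy; rewrite -[y]opprK; apply: srB => //; apply: srN. Qed.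
End SR.

Section Span.
Variable D : K -> Prop.
Hypothesis HD : subring D.

Lemma span0 s : span D s 0.
Proof.
elim: s => [//|a s IH] /=; exists 0, 0; split; first exact: sr0.
by split => //; rewrite mul0r addr0.
Qed.

Lemma span_submodule s : submodule D (span D s).
Proof.
split; first exact: span0.
elim: s => [|a s [IHa IHm]] /=.
- by split; [move=> x y -> ->; rewrite addr0 | move=> r x _ ->; rewrite mulr0].
- split.
  + move=> x y [d [u [Dd [Su ->]]]] [d' [u' [Dd' [Su' ->]]]].
    exists (d + d'), (u + u'); split; first exact: srD.
    split; first exact: IHa.
    by rewrite mulrDl -!addrA; congr (_ + _); rewrite addrCA.
  + move=> r x Dr [d [u [Dd [Su ->]]]]; exists (r * d), (r * u); split; first exact: srM.
    split; first exact: IHm.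
    by rewrite mulrDr mulrA.
Qed.

Lemma span_in s a : a \in s -> span D s a.
Proof.
elim: s => [//|b s IH] /=; rewrite inE => /orP [/eqP ->| /IH h].
- exists 1, 0; split; first exact: sr1.
  by split; [exact: span0 | rewrite mul1r addr0].
- exists 0, a; split; first exact: sr0.
  by split => //; rewrite mul0r add0r.
Qed.

Lemma span_sub s E : submodule D E -> (forall a, a \in s -> E a) -> subset (span D s) E.
Proof.
move=> [E0 [Eadd Emul]]; elim: s => [|b s IH] h x /=; first by move->.
move=> [d [y [Dd [Sy ->]]]]; apply: Eadd.
- by apply: Emul => //; apply: h; rewrite inE eqxx.
- by apply: (IH _ y) => // a ha; apply: h; rewrite inE ha orbT.
Qed.

Lemma span_incl s t : (forall a, a \in s -> a \in t) -> subset (span D s) (span D t).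
Proof. move=> h; apply: span_sub; first exact: span_submodule. by move=> a /h; apply: span_in. Qed.

Lemma span_map_scale b s : span D [seq b * g | g <- s] = scale b (span D s).
Proof.
apply: seteqE => x; split.
- elim: s x => [|a s IH] x /=.
  + by move->; exists 0; split => //; rewrite mulr0.
  + move=> [d [y [Dd [Sy ->]]]]; have [e [Se ->]] := IH _ Sy.
    exists (d * a + e); split; first by exists d, e.
    by rewrite mulrDr; congr (_ + _); rewrite mulrCA.
- move=> [e [Se ->]]; elim: s e Se => [|a s IH] e /=.
  + by move->; rewrite mulr0.
  + move=> [d [y [Dd [Sy ->]]]]; exists d, (b * y); split => //.
    split; first exact: IH.
    by rewrite mulrDr; congr (_ + _); rewrite mulrCA.
Qed.
End Span.

Lemma prodm_in E F e f : E e -> F f -> prodm E F (e * f).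
Proof. move=> he hf; rewrite -[e * f]addr0; apply: fsumS; [by exists e, f|exact: fsum0]. Qed.

Lemma prodm_mono E E' F F' : subset E E' -> subset F F' -> subset (prodm E F) (prodm E' F').
Proof.
move=> hE hF x; rewrite /prodm; elim=> [|a y [e [f [he [hf ->]]]] _ IH]; first exact: fsum0.
by apply: fsumS => //; exists e, f; split; [exact: hE|split; [exact: hF|]].
Qed.

Lemma prodm_sub E F (S : K -> Prop) : S 0 -> (forall x y, S x -> S y -> S (x + y)) ->
  (forall e f, E e -> F f -> S (e * f)) -> subset (prodm E F) S.
Proof.
move=> S0 Sadd Sp x; rewrite /prodm; elim=> [//|a y [e [f [he [hf ->]]]] _ IH].
by apply: Sadd => //; apply: Sp.
Qed.


Lemma test_id (t s e c : K) : t != 0 -> t * s * (e * (c / t)) = s * c * e.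
Proof. by move=> t0; rewrite [e * _]mulrC mulrA; congr (_ * _); rewrite mulrAC [t * _]mulrC divfK // mulrC. Qed.

Lemma add_id (x y : K) : y != 0 -> x + y != 0 -> (x / y + 1) * (x + y)^-1 = y^-1.
Proof.
move=> y0 xy0; by rewrite -[1](divff y0) -mulrDl mulrAC divff // mul1r.
Qed.

Definition Mv (V : K -> Prop) x := V x /\ (x = 0 \/ ~ V x^-1).

Section Val.
Variable V : K -> Prop.
Hypothesis sV : subring V.
Hypothesis vV : forall x : K, x != 0 -> V x \/ V x^-1.

Lemma Mv0 : Mv V 0.
Proof. by split; [exact: sr0|left]. Qed.

Lemma Mv_mul v m : V v -> Mv V m -> Mv V (v * m).
Proof.
move=> Vv [Vm hm]; split; first exact: srM.
case: (eqVneq (v * m) 0) => [->|vm0]; first by left.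
right => h; move: vm0; rewrite mulf_eq0 negb_or => /andP [v0 m0].
case: hm => [m0'|nm]; first by move: m0; rewrite m0' eqxx.
apply: nm; have -> : m^-1 = v * (v * m)^-1 by rewrite invfM mulrA divff // mul1r.
exact: srM.
Qed.

Lemma Mv_add x y : Mv V x -> Mv V y -> Mv V (x + y).
Proof.
move=> [Vx hx] [Vy hy]; split; first exact: srD.
case: (eqVneq (x + y) 0) => [->|xy0]; first by left.
right => h.
case: hx => [x0|nx].
  move: h xy0; rewrite x0 add0r => h xy0; case: hy => [y0|ny]; last exact: ny.
  by move: xy0; rewrite y0 eqxx.
case: hy => [y0|ny]; first by move: h; rewrite y0 addr0.
have x0 : x != 0 by apply/eqP => x0; apply: nx; rewrite x0 invr0; exact: sr0.
have y0 : y != 0 by apply/eqP => y0; apply: ny; rewrite y0 invr0; exact: sr0.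
have xy : x / y != 0 by rewrite mulf_neq0 // invr_eq0.
case: (vV xy) => h1.
- apply: ny; rewrite -(add_id y0 xy0); apply: srM => //; apply: srD => //; exact: sr1.
- apply: nx; move: h1; rewrite invf_div => h1.
  have yx0 : y + x != 0 by rewrite addrC.
  rewrite -(add_id x0 yx0) [y + x]addrC.
  by apply: srM => //; apply: srD => //; exact: sr1.
Qed.

Lemma Mv_not1 : ~ Mv V 1.
Proof. move=> [_ [/eqP|]]; [by rewrite oner_eq0|by rewrite invr1; apply; exact: sr1]. Qed.

Lemma unit_of s : V s -> ~ Mv V s -> s != 0 /\ V s^-1.
Proof.
move=> Vs nM; split; first by apply/eqP => s0; apply: nM; split => //; left.
by apply: NNPP => h; apply: nM; split => //; right.
Qed.

Lemma Mv_prime a b : V a -> V b -> Mv V (a * b) -> Mv V a \/ Mv V b.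
Proof.
move=> Va Vb hab; apply: NNPP => hn.
have [a0 Vai] := unit_of Va (fun h => hn (or_introl h)).
have [b0 Vbi] := unit_of Vb (fun h => hn (or_intror h)).
case: hab => _ [/eqP|]; first by rewrite mulf_eq0 (negbTE a0) (negbTE b0).
by apply; rewrite invfM; apply: srM.
Qed.
End Val.
End Basic.

Section Star.
Variable K : fieldType.
Variables (D : K -> Prop) (star : (K -> Prop) -> (K -> Prop)).
Hypothesis HD : domain_with_qf D.
Hypothesis Hs : semistar D star.
Implicit Types (E F G N I J M : K -> Prop).

Let HDr : subring D := HD.1.
Local Notation sf := (star_f D star).

Lemma starF E : Fbar D E -> Fbar D (star E).
Proof. by case: Hs => h _; apply: h. Qed.
Lemma star_mono E F : Fbar D E -> Fbar D F -> subset E F -> subset (star E) (star F).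
Proof. by case: Hs => _ [_ [h _]]; apply: h. Qed.
Lemma star_ext E : Fbar D E -> subset E (star E).
Proof. by case: Hs => _ [_ [_ [h _]]]; apply: h. Qed.
Lemma star_idem E : Fbar D E -> star (star E) = star E.
Proof. by case: Hs => _ [_ [_ [_ h]]] hE; apply: seteqE; apply: h. Qed.
Lemma star_scale x E : x != 0 -> Fbar D E -> star (scale x E) = scale x (star E).
Proof. by case: Hs => _ [h _] hx hE; apply: seteqE; apply: h. Qed.
Lemma star_sub E : Fbar D E -> submodule D (star E).
Proof. by move/starF => []. Qed.

Lemma Fbar_span s : nonzero (span D s) -> Fbar D (span D s).
Proof. by move=> h; split => //; apply: span_submodule. Qed.
Lemma fg_span s : nonzero (span D s) -> fgfrac D (span D s).
Proof. by move=> h; split => //; exists s. Qed.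
Lemma fgE F : fgfrac D F -> exists s, F = span D s /\ nonzero (span D s).
Proof. move=> [[s h] nz]; exists s; have e := seteqE h; subst F; by []. Qed.
Lemma fg_Fbar F : fgfrac D F -> Fbar D F.
Proof. by move/fgE => [s [-> n]]; apply: Fbar_span. Qed.
Lemma nz_span1 e : e != 0 -> nonzero (span D [:: e]).
Proof. by move=> e0; exists e; split => //; apply: span_in => //; rewrite inE eqxx. Qed.
Lemma nz_incl E F : subset E F -> nonzero E -> nonzero F.
Proof. by move=> h [e [he e0]]; exists e; split => //; apply: h. Qed.

Lemma sf_mono E F : subset E F -> subset (sf E) (sf F).
Proof. move=> h x [G [fG [GE sG]]]; exists G; split => //; split => // y /GE; apply: h. Qed.

Lemma sf_ext E : submodule D E -> nonzero E -> subset E (sf E).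
Proof.
move=> hE [e [he e0]] x hx.
case: (eqVneq x 0) => [->|x0].
- exists (span D [:: e]); split; first exact/fg_span/nz_span1.
  split; first by apply: span_sub => // a; rewrite inE => /eqP ->.
  by case: (star_sub (Fbar_span (nz_span1 e0))).
- exists (span D [:: x]); split; first exact/fg_span/nz_span1.
  split; first by apply: span_sub => // a; rewrite inE => /eqP ->.
  by apply: star_ext; [exact/Fbar_span/nz_span1|apply: span_in => //; rewrite inE eqxx].
Qed.

Lemma span_cat_l s t : subset (span D s) (span D (s ++ t)).
Proof. by apply: span_incl => // a ha; rewrite mem_cat ha. Qed.
Lemma span_cat_r s t : subset (span D t) (span D (s ++ t)).
Proof. by apply: span_incl => // a ha; rewrite mem_cat ha orbT. Qed.
Lemma span_subE s E : submodule D E -> subset (span D s) E -> forall a, a \in s -> E a.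
Proof. by move=> _ h a ha; apply: h; apply: span_in. Qed.

Lemma sf_submodule E : submodule D E -> nonzero E -> submodule D (sf E).
Proof.
move=> hE nE; split; first by apply: sf_ext => //; case: hE.
split.
- move=> x y [F1 [f1 [F1E s1]]] [F2 [f2 [F2E s2]]].
  have [t1 [e1 n1]] := fgE f1; have [t2 [e2 n2]] := fgE f2; subst F1 F2.
  have n12 : nonzero (span D (t1 ++ t2)) by apply: nz_incl n1; apply: span_cat_l.
  exists (span D (t1 ++ t2)); split; first exact: fg_span.
  split.
  + apply: span_sub => // a; rewrite mem_cat => /orP [] ha.
    * by apply: F1E; apply: span_in.
    * by apply: F2E; apply: span_in.
  + have [_ [Sadd _]] := star_sub (Fbar_span n12); apply: Sadd.
    * by apply: (star_mono (Fbar_span n1) (Fbar_span n12) (@span_cat_l _ _)).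
    * by apply: (star_mono (Fbar_span n2) (Fbar_span n12) (@span_cat_r _ _)).
- move=> r x Dr [F [fF [FE sF]]]; exists F; split => //; split => //.
  have [_ [_ Smul]] := star_sub (fg_Fbar fF); exact: Smul.
Qed.

Lemma collect E : submodule D E -> nonzero E -> forall s : seq K, (forall a, a \in s -> sf E a) ->
  exists t, subset (span D t) E /\ nonzero (span D t) /\ forall a, a \in s -> star (span D t) a.
Proof.
move=> hE [e [he e0]]; elim=> [|a s IH] h.
- exists [:: e]; split; first by apply: span_sub => // b; rewrite inE => /eqP ->.
  by split => //; exact: nz_span1.
- have [|t [tE [nt st]]] := IH; first by move=> b hb; apply: h; rewrite inE hb orbT.
  have [F [fF [FE sF]]] := h a (mem_head _ _).
  have [ta [eta nta]] := fgE fF; subst F.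
  have n' : nonzero (span D (ta ++ t)) by apply: nz_incl nta; apply: span_cat_l.
  exists (ta ++ t); split.
  + apply: span_sub => // b; rewrite mem_cat => /orP [] hb.
    * by apply: FE; apply: span_in.
    * by apply: tE; apply: span_in.
  + split => // b; rewrite inE => /orP [/eqP ->|hb].
    * exact: (star_mono (Fbar_span nta) (Fbar_span n') (@span_cat_l _ _)).
    * by apply: (star_mono (Fbar_span nt) (Fbar_span n') (@span_cat_r _ _)); apply: st.
Qed.

Lemma sf_idem E : submodule D E -> nonzero E -> subset (sf (sf E)) (sf E).
Proof.
move=> hE nE x [F [fF [FE sF]]].
have [s [es ns]] := fgE fF; subst F.
have [t [tE [nt st]]] := collect hE nE (span_subE (sf_submodule hE nE) FE).
exists (span D t); split; first exact: fg_span.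
split => //.
have Ft : subset (span D s) (star (span D t)) by apply: span_sub => //; apply: star_sub; apply: Fbar_span.
rewrite -(star_idem (Fbar_span nt)).
exact: (star_mono (Fbar_span ns) (starF (Fbar_span nt)) Ft).
Qed.

Definition qc N := fun x => sf N x /\ D x.

Lemma sub_inter E : submodule D E -> submodule D (fun x => E x /\ D x).
Proof.
move=> [E0 [Ea Em]]; split; first by split => //; apply: (sr0 HDr).
split.
- by move=> x y [? ?] [? ?]; split; [apply: Ea|apply: (srD HDr)].
- by move=> r x Dr [? ?]; split; [apply: Em|apply: (srM HDr)].
Qed.

Lemma qc_quasi N : ideal D N -> quasi_ideal D sf (qc N) /\ subset N (qc N).
Proof.
move=> [ND [sN nN]].
have Nq : subset N (qc N) by move=> x hx; split; [apply: sf_ext|apply: ND].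
have sq : submodule D (qc N) by apply: sub_inter; apply: sf_submodule.
have nq : nonzero (qc N) by apply: nz_incl nN.
split => //; split.
  by split; [move=> x; rewrite /qc => -[] | split].
move=> x /=; rewrite /qc; split.
- move=> [h Dx]; split => //; apply: (sf_idem sN nN); apply: (sf_mono _ h); by move=> y [].
- move=> hx; split; last by case: hx.
  exact: (sf_ext sq nq hx).
Qed.

Lemma QMax_ideal M : QMax D sf M -> ideal D M.
Proof. by case=> [[]]. Qed.

Lemma QMax_prime M : QMax D sf M -> forall a b, D a -> D b -> M (a * b) -> M a \/ M b.
Proof.
move=> hM a b Da Db Mab; case: (classic (M a)) => Ma; [by left|right].
have [[[MD [sM nM]] qM] [nM1 maxM]] := hM.
have [M0 [Madd Mmul]] := sM.
case: (eqVneq b 0) => [->|b0]; first by [].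
pose Nn := fun x => exists m d, M m /\ D d /\ x = m + d * a.
have MN : subset M Nn.
{ move=> m hm; exists m, 0; split => //; split; [exact: (sr0 HDr)|by rewrite mul0r addr0]. }
have iN : ideal D Nn.
{ split; first by move=> x [m [d [hm [Dd ->]]]]; apply: (srD HDr); [exact: MD|exact: (srM HDr)].
  split; last exact: nz_incl nM.
  split; first exact: MN.
  split.
  - move=> x y [m [d [hm [Dd ->]]]] [m' [d' [hm' [Dd' ->]]]].
    exists (m + m'), (d + d'); split; first exact: Madd.
    split; first exact: (srD HDr).
    by rewrite mulrDl -!addrA; congr (_ + _); rewrite addrCA.
  - move=> r x Dr [m [d [hm [Dd ->]]]]; exists (r * m), (r * d); split; first exact: Mmul.
    split; first exact: (srM HDr).
    by rewrite mulrDr mulrA. }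
case: (classic (sf Nn 1)) => [[G [fG [GN sG]]]|nN1].
- have [s [es ns]] := fgE fG; subst G.
  have nbs : nonzero (span D [seq b * g | g <- s]).
  { rewrite (span_map_scale D); have [e [he e0]] := ns; exists (b * e); split; first by exists e.
    by rewrite mulf_neq0. }
  have bsM : subset (span D [seq b * g | g <- s]) M.
  { apply: span_sub => // y /mapP [g gs ->].
    have [m [d [hm [Dd ->]]]] := GN _ (span_in HDr gs).
    rewrite mulrDr; apply: Madd; first exact: Mmul.
    rewrite mulrCA; apply: Mmul => //; by rewrite mulrC. }
  apply (qM b).1; split => //.
  exists (span D [seq b * g | g <- s]); split; first exact: fg_span.
  split => //.
  rewrite (span_map_scale D) star_scale //; last exact: Fbar_span.
  by exists 1; split => //; rewrite mulr1.
- have [qJ NJ] := qc_quasi iN.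
  exfalso; apply: Ma; apply: (maxM _ qJ).
  + by move=> [].
  + by move=> x /MN /NJ.
  + apply: NJ; exists 0, 1; split => //; split; first exact: (sr1 HDr).
    by rewrite add0r mul1r.
Qed.

Lemma ZL I : ideal D I -> ~ sf I 1 -> exists M, QMax D sf M /\ subset I M.
Proof.
move=> iI nI1.
pose Fam J := ideal D J /\ ~ sf J 1 /\ subset I J.
have Hch : forall C, (forall A, C A -> Fam A) -> zchainP C -> (exists A, C A) -> Fam (zbigU C).
{ move=> C hC chC [A0 CA0].
  have [[A0D [sA0 nA0]] [_ IA0]] := hC _ CA0.
  have sU : submodule D (zbigU C).
  { split; first by exists A0; split => //; case: sA0.
    split.
    - move=> x y [A [CA hx]] [B [CB hy]].
      have [[_ [[_ [Aa _]] _]] _] := hC _ CA.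
      have [[_ [[_ [Ba _]] _]] _] := hC _ CB.
      case: (chC _ _ CA CB) => h.
      + by exists B; split => //; apply: Ba => //; exact: h.
      + by exists A; split => //; apply: Aa => //; exact: h.
    - move=> r x Dr [A [CA hx]]; exists A; split => //.
      have [[_ [[_ [_ Am]] _]] _] := hC _ CA; exact: Am. }
  have one : forall s : seq K, (forall a, a \in s -> zbigU C a) -> exists A, C A /\ forall a, a \in s -> A a.
  { elim=> [|a s IH] h; first by exists A0.
    have [|A [CA hA]] := IH; first by move=> b hb; apply: h; rewrite inE hb orbT.
    have [B [CB hB]] := h a (mem_head _ _).
    case: (chC _ _ CA CB) => hAB.
    - exists B; split => // b; rewrite inE => /orP [/eqP ->|hb] //; apply: hAB; exact: hA.
    - exists A; split => // b; rewrite inE => /orP [/eqP ->|hb]; [exact: hAB|exact: hA]. }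
  split; [split; [|split] | split].
  - by move=> x [A [CA hx]]; have [[AD _] _] := hC _ CA; exact: AD.
  - exact: sU.
  - by apply: nz_incl nA0 => x hx; exists A0.
  - move=> [F [fF [FU sF]]]; have [s [es ns]] := fgE fF; subst F.
    have [A [CA hA]] := one s (fun a ha => FU _ (span_in HDr ha)).
    have [[_ [sA _]] [nA1 _]] := hC _ CA.
    apply: nA1; exists (span D s); split => //; split => //.
    exact: span_sub.
  - by move=> x hx; exists A0; split => //; apply: IA0. }
have [M [[iM [nM1 IM]] maxM]] := zorn0 Hch (ex_intro _ I (conj iI (conj nI1 (fun x (h : I x) => h)))).
exists M; split => //.
have [MD [sM nM]] := iM.
have [qJ MJ] := qc_quasi iM.
have famJ : Fam (qc M).
{ split; first by case: qJ.
  split; last by move=> x /IM /MJ.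
  move=> h; apply: nM1; apply: (sf_idem sM nM); apply: (sf_mono _ h); by move=> y []. }
have JM := maxM _ famJ MJ.
split; [split => // x; split; [exact: JM|exact: MJ] | split].
- by move=> M1; apply: nM1; apply: sf_ext.
- move=> J qJ' nJ1 MJ'; apply: maxM => //.
  split; first by case: qJ'.
  split; last by move=> x /IM /MJ'.
  move=> h; apply: nJ1; apply (qJ'.2 1).1; split => //; exact: (sr1 HDr).
Qed.

Lemma denom E M x : subset E D -> submodule D E -> M 0 -> ~ M 1 ->
  (forall a b, D a -> D b -> M (a * b) -> M a \/ M b) ->
  prodm E (localize D M) x -> exists s, D s /\ ~ M s /\ E (s * x).
Proof.
move=> ED [E0 [Ea Em]] M0 nM1 pM; rewrite /prodm.
elim=> [|a y [e [f [he [hf ->]]]] _ [s [Ds [nMs Esy]]]].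
- by exists 1; split; [exact: (sr1 HDr)| split => //; rewrite mulr0].
- have [c [t [Dc [Dt [nMt ->]]]]] := hf.
  have t0 : t != 0 by apply/eqP => t0; apply: nMt; rewrite t0.
  exists (t * s); split; first exact: (srM HDr).
  split; first by case/(pM _ _ Dt Ds).
  rewrite mulrDr; apply: Ea.
  + by rewrite test_id //; apply: Em => //; apply: (srM HDr).
  + by rewrite -mulrA; apply: Em.
Qed.

Lemma ft E x : ideal D E -> x != 0 -> stilde D star E x ->
  exists g : seq K, nonzero (span D g) /\ star (span D g) 1 /\ forall a, a \in g -> D a /\ E (a * x).
Proof.
move=> [ED [sE nE]] x0 hx.
have [E0 [Ea Em]] := sE.
pose J := fun d => D d /\ E (d * x).
have iJ : ideal D J.
{ split; first by move=> d [].
  split.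
  - split; first by split; [exact: (sr0 HDr)| by rewrite mul0r].
    split.
    + by move=> a b [Da Ea'] [Db Eb]; split; [exact: (srD HDr)|rewrite mulrDl; exact: Ea].
    + by move=> r a Dr [Da Ea']; split; [exact: (srM HDr)|rewrite -mulrA; exact: Em].
  - have [e [he e0]] := nE; have [a [b [Da [Db [b0 xab]]]]] := HD.2 x.
    exists (e * b); split; last by rewrite mulf_neq0.
    split; first by apply: (srM HDr) => //; apply: ED.
    rewrite -mulrA xab [b * _]mulrCA divff // mulr1 mulrC; exact: Em. }
case: (classic (sf J 1)) => [[G [fG [GJ sG]]]|nJ1].
- have [g [eg ng]] := fgE fG; subst G; exists g; split => //; split => // a ha.
  exact: GJ _ (span_in HDr ha).
- exfalso; have [M [qM JM]] := ZL iJ nJ1.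
  have [_ [[M0 _] _]] := QMax_ideal qM.
  have [_ [nM1 _]] := qM.
  have [s [Ds [nMs Esx]]] := denom ED sE M0 nM1 (QMax_prime qM) (hx M qM).
  by apply: nMs; apply: JM.
Qed.
End Star.

Section Main.
Variable K : fieldType.
Variables (D : K -> Prop) (star : (K -> Prop) -> (K -> Prop)).
Hypothesis HD : domain_with_qf D.
Hypothesis Hs : semistar D star.
Let HDr : subring D := HD.1.
Local Notation sf := (star_f D star).
Local Notation st := (stilde D star).

Lemma loc1 M : ~ M 1 -> localize D M 1.
Proof. move=> h; exists 1, 1; split; first exact: (sr1 HDr). split; first exact: (sr1 HDr). by split => //; rewrite divr1. Qed.

Lemma locinv M p : D p -> ~ M p -> localize D M p^-1.
Proof. move=> Dp h; exists 1, p; split; first exact: (sr1 HDr). by split => //; split => //; rewrite mul1r. Qed.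

Lemma dir1 n : star_dimv D st n -> esup (QSpec D st) (fun P => valdim (localize D P)) n.
Proof.
case=> [->|[V [[[sV [DV vV]] hV] kV]]]; first by left.
case: (eqVneq n 0%N) => [->|n0]; first by left.
right.
pose P := fun x => D x /\ Mv V x.
have sP : submodule D P.
{ split; first by split; [exact: (sr0 HDr)|exact: Mv0].
  split.
  - by move=> x y [Dx Mx] [Dy My]; split; [exact: (srD HDr)|exact: Mv_add].
  - by move=> r x Dr [Dx Mx]; split; [exact: (srM HDr)|apply: Mv_mul => //; apply: DV]. }
have nP : nonzero P.
{ have n0' : (0 < n)%N by rewrite lt0n.
  have [p [pp pc]] := kV.
  have [h01 n10] := pc 0%N n0'.
  have [p1V [[p10 [_ p1m]] [np11 _]]] := pp 1%N n0'.
  have [_ [[p00 _] _]] := pp 0%N (leq0n n).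
  have [y [p1y np0y]] : exists y, p 1%N y /\ ~ p 0%N y.
  { apply: NNPP => h; apply: n10 => y hy; apply: NNPP => hn; apply: h; by exists y. }
  have y0 : y != 0 by apply/eqP => y0; apply: np0y; rewrite y0.
  have My : Mv V y.
  { split; first exact: p1V; right => hi; apply: np11.
    by rewrite -(mulVf y0); apply: p1m. }
  have [a [b [Da [Db [b0 yab]]]]] := HD.2 y.
  have ea : a = b * y by rewrite yab mulrCA divff // mulr1.
  exists a; split; last by rewrite ea mulf_neq0.
  split => //; rewrite ea; apply: Mv_mul => //; exact: DV. }
have iP : ideal D P by split => //; move=> x [].
exists P; split; last first.
- right; exists V; split => //.
  split => //; split.
  + move=> x [c [s [Dc [Ds [nPs ->]]]]].
    have [_ Vsi] := unit_of (DV _ Ds) (fun h => nPs (conj Ds h)).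
    by apply: (srM sV) => //; apply: DV.
  + exact: vV.
- split; last first.
  + split; first by move=> [_ h]; exact: (Mv_not1 sV h).
    move=> a b Da Db [_ Mab].
    by case: (Mv_prime sV (DV _ Da) (DV _ Db) Mab) => h; [left|right].
  split => // x; split; last first.
  + move=> hx; split; last by case: hx.
    move=> M qM; rewrite -[x]mulr1; apply: prodm_in => //.
    by apply: loc1; case: qM => _ [].
  + move=> [hx Dx]; split => //.
    case: (eqVneq x 0) => [->|x0]; first exact: Mv0.
    have [g [ng [sg hg]]] := ft HD Hs iP x0 hx.
    pose F := span D [seq x * a | a <- g].
    have nF : nonzero F.
    { rewrite /F span_map_scale; have [e [he e0]] := ng; exists (x * e); split; first by exists e.
      by rewrite mulf_neq0. }
    have FP : subset F P.
    { apply: span_sub => // y /mapP [a ag ->]; rewrite mulrC; exact: (hg a ag).2. }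
    have stF : st F x.
    { move=> M qM.
      have [[MD [[M0 _] _]] qMe] := qM.1.
      have [a [ag nMa]] : exists a, a \in g /\ ~ M a.
      { apply: NNPP => hn; have [_ [nM1 _]] := qM; apply: nM1.
        apply: (qMe 1).1; split; last exact: (sr1 HDr).
        exists (span D g); split; first exact: fg_span.
        split => //; apply: span_sub => //; first by case: qM => [[[_ [sM _]] _] _].
        move=> a ag; apply: NNPP => nMa; apply: hn; by exists a. }
      have a0 : a != 0 by apply/eqP => a0; apply: nMa; rewrite a0.
      rewrite -[x](mulfK a0); apply: prodm_in.
      + by apply: span_in => //; apply: map_f.
      + by apply: locinv => //; exact: (hg a ag).1. }
    have := hV F (fg_span nF) x stF.
    apply: prodm_sub; first exact: Mv0.
    * by move=> u v; apply: Mv_add.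
    * by move=> e f /FP [_ Me] Vf; rewrite mulrC; apply: Mv_mul.
Qed.

Lemma dir2 n : esup (QSpec D st) (fun P => valdim (localize D P)) n -> star_dimv D st n.
Proof.
case=> [->|[P [[[iP qP] prP] [->|[V [[sV [PV vV]] kV]]]]]]; try by left.
right; exists V; split => //.
have [iPD _] := iP.
have [M [qM PM]] : exists M, QMax D sf M /\ subset P M.
{ apply: NNPP => hn; apply: prP.1; apply: (qP 1).1; split; last exact: (sr1 HDr).
  move=> M qM.
  have [p [Pp nMp]] : exists p, P p /\ ~ M p.
  { apply: NNPP => h; apply: hn; exists M; split => // p Pp; apply: NNPP => nMp; apply: h; by exists p. }
  have p0 : p != 0 by apply/eqP => p0; apply: nMp; rewrite p0; have [[_ [[M0 _] _]] _] := qM.1.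
  rewrite -(mulfV p0); apply: prodm_in => //.
  by apply: locinv => //; apply: iPD. }
split.
- split => //; split => // d Dd; apply: PV; exists d, 1; split => //.
  split; first exact: (sr1 HDr).
  split; first exact: prP.1.
  by rewrite divr1.
- move=> F fF x hx; apply: (prodm_mono (E := F) (F := localize D M)) => //.
  + move=> y [c [s [Dc [Ds [nMs ->]]]]]; apply: PV; exists c, s; split => //; split => //.
    by split => // Ps; apply: nMs; apply: PM.
  + exact: hx.
Qed.

Lemma main_sec n : star_dimv D st n <-> esup (QSpec D st) (fun P => valdim (localize D P)) n.
Proof. split; [exact: dir1|exact: dir2]. Qed.
End Main.

Theorem lemma2p5 (K : fieldType) (D : K -> Prop) (star : (K -> Prop) -> (K -> Prop)) :
  domain_with_qf D -> semistar D star ->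
  forall n : nat,
    star_dimv D (stilde D star) n <->
    esup (QSpec D (stilde D star)) (fun P => valdim (localize D P)) n.
Proof. move=> HD Hs n; exact: main_sec. Qed.
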